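(* Let $G$ and $H$ be groups such that the power quandles $\mathrm{Pq}(G)$ and $\mathrm{Pq}(H)$ are isomorphic. Then the central quotients are isomorphic as groups: $G/\mathrm{Z}(G)\cong H/\mathrm{Z}(H)$.
   Context: A power quandle $(P,\rhd,\pi,e)$ consists of a set $P$, a binary operation $\rhd$, an element $e$, and maps $\pi^n\colon P\to P$ ($n\in\mathbb{Z}$) satisfying: each $\lambda_a\colon b\mapsto a\rhd b$ is bijective and $a\rhd(b\rhd c)=(a\rhd b)\rhd(a\rhd c)$; $a\rhd a=a$; $e\rhd b=b$, $a\rhd e=e$; $\pi^1=\mathrm{id}$, $\pi^m\circ\pi^n=\pi^{mn}$; $\pi^0(a)=e$; $a\rhd\pi^n(b)=\pi^n(a\rhd b)$; $\pi^n(a)\rhd b=\lambda_a^n(b)$. An isomorphism of power quandles is a bijection preserving $\rhd$, all $\pi^n$ and $e$. For a group $G$, $\mathrm{Pq}(G)$ is the power quandle on the underlying set of $G$ with $a\rhd b=aba^{-1}$, $\pi^n(a)=a^n$, and $e$ the identity element. $\mathrm{Z}(G)$ denotes the center of $G$. *)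

(* Defs.v *)
From HB Require Import structures.
From mathcomp Require Import all_boot monoid ssralg ssrint.

Set Implicit Arguments.
Unset Strict Implicit.
Unset Printing Implicit Defensive.

Local Open Scope group_scope.

Section PowerQuandleOfGroup.
Variable G : groupType.

Definition zpow (a : G) (n : int) : G :=
  match n with
  | Posz k => a ^+ k
  | Negz k => (a ^+ k.+1)^-1
  end.

Definition pq_op (a b : G) : G := a * b * a^-1.
Definition pq_pow (n : int) (a : G) : G := zpow a n.
Definition pq_e : G := 1.

Definition central (z : G) : Prop := forall x : G, x * z = z * x.

(* The quotient G/Z(G): its elements are the cosets xZ(G), represented as
   predicates on G. *)
Definition cosetZ : Type :=
  {S : G -> Prop | exists x : G, S = (fun y => central (x^-1 * y))}.

Definition cosZ (x : G) : cosetZ :=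
  exist (fun S : G -> Prop => exists x0 : G, S = (fun y => central (x0^-1 * y)))
        (fun y => central (x^-1 * y))
        (ex_intro _ x erefl).
End PowerQuandleOfGroup.

Definition pq_iso (G H : groupType) (f : G -> H) : Prop :=
  bijective f /\
  (forall a b : G, f (pq_op a b) = pq_op (f a) (f b)) /\
  (forall (n : int) (a : G), f (pq_pow n a) = pq_pow n (f a)) /\
  f (pq_e G) = pq_e H.

(* Group isomorphism G/Z(G) ~= H/Z(H): a bijection F between the coset types
   which is multiplicative for the quotient multiplication
   (xZ)(yZ) = (xy)Z, written via representatives. *)
Definition quotZ_iso (G H : groupType) (F : cosetZ G -> cosetZ H) : Prop :=
  bijective F /\
  (forall (x y : G) (a b : H),
      F (cosZ x) = cosZ a -> F (cosZ y) = cosZ b ->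
      F (cosZ (x * y)) = cosZ (a * b)).

(* Main.v *)
Require Import Defs.
From HB Require Import structures.
From mathcomp Require Import all_boot monoid ssralg ssrint.
From Stdlib Require Import ClassicalEpsilon FunctionalExtensionality PropExtensionality ProofIrrelevance.

Set Implicit Arguments.
Unset Strict Implicit.
Local Open Scope group_scope.

Lemma central_lam (G : groupType) (u y : G) :
  central (u^-1 * y) <-> (forall x, pq_op u x = pq_op y x).
Proof.
rewrite /central /pq_op; split.
- move=> C x.
  have E := C x.
  have : u * (x * (u^-1 * y)) * y^-1 = u * (u^-1 * y * x) * y^-1 by rewrite E.
  rewrite !mulgA mulgK mulgV mul1g => ->.
  by [].
- move=> L x.
  have E := L x.
  have : u^-1 * (u * x * u^-1) * y = u^-1 * (y * x * y^-1) * y by rewrite E.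
  rewrite !mulgA mulVg mul1g mulgVK => ->.
  by rewrite -!mulgA.
Qed.

Lemma cosZ_eq (G : groupType) (u v : G) :
  (forall x, pq_op u x = pq_op v x) -> cosZ u = cosZ v.
Proof.
move=> L.
apply: eq_sig_hprop; first by move=> ? ? ?; apply: proof_irrelevance.
apply: functional_extensionality => y /=.
apply: propositional_extensionality.
rewrite !central_lam; split=> H x; by rewrite -H.
Qed.

Lemma cosZ_inv (G : groupType) (u v : G) :
  cosZ u = cosZ v -> forall x, pq_op u x = pq_op v x.
Proof.
move=> E.
have E' := f_equal (@proj1_sig _ _) E; simpl in E'.
have : central (v^-1 * v) by rewrite mulVg => x; rewrite mulg1 mul1g.
rewrite -(f_equal (fun P => P v) E').
by move/central_lam.
Qed.

Definition rep (G : groupType) (S : cosetZ G) : G :=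
  proj1_sig (constructive_indefinite_description _ (proj2_sig S)).

Lemma repP (G : groupType) (S : cosetZ G) : S = cosZ (rep S).
Proof.
rewrite /rep; case: (constructive_indefinite_description _ _) => x Hx /=.
apply: eq_sig_hprop; first by move=> ? ? ?; apply: proof_irrelevance.
exact Hx.
Qed.

Lemma pq_opM (G : groupType) (x y w : G) :
  pq_op (x * y) w = pq_op x (pq_op y w).
Proof. by rewrite /pq_op invgM !mulgA. Qed.

Section Map.
Variables (G H : groupType) (f : G -> H) (g : H -> G).
Hypothesis fg : cancel g f.
Hypothesis fop : forall a b, f (pq_op a b) = pq_op (f a) (f b).

Definition Fm (S : cosetZ G) : cosetZ H := cosZ (f (rep S)).

Lemma lam_f (r x : G) : (forall w, pq_op r w = pq_op x w) ->
  forall z, pq_op (f r) z = pq_op (f x) z.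
Proof. by move=> L z; rewrite -(fg z) -!fop L. Qed.

Lemma FmE (x : G) : Fm (cosZ x) = cosZ (f x).
Proof.
rewrite /Fm; apply: cosZ_eq; apply: lam_f; apply: cosZ_inv.
by rewrite -repP.
Qed.
End Map.

Theorem mainTheorem4 (G H : groupType) :
  (exists f : G -> H, pq_iso f) ->
  exists F : cosetZ G -> cosetZ H, quotZ_iso F.
Proof.
case=> f [[g gf fg] [fop _]].
have gop : forall a b, g (pq_op a b) = pq_op (g a) (g b).
  by move=> a b; rewrite -{1}(fg a) -{1}(fg b) -fop gf.
exists (Fm f); split.
- exists (Fm g) => S.
  + rewrite (repP S) (FmE fg fop) (FmE gf gop) gf; by [].
  + rewrite (repP S) (FmE gf gop) (FmE fg fop) fg; by [].
- move=> x y a b; rewrite !(FmE fg fop) => Ea Eb.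
  apply: cosZ_eq => z.
  rewrite -(fg z) -fop pq_opM fop fop fg.
  by rewrite (cosZ_inv Eb) (cosZ_inv Ea) -pq_opM.
Qed.
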